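(* Let $R$ be a ring with $1$ and let $\lambda$ be a lattice identity. Then $\lambda$ holds in the submodule lattice $\mathrm{Sub}\,M$ for every unital left $R$-module $M$ if and only if the dual of $\lambda$ holds in $\mathrm{Sub}\,M$ for every unital left $R$-module $M$.
   Context: $\mathrm{Sub}\,M$ is the lattice of submodules of $M$ with $X\wedge Y=X\cap Y$ and $X\vee Y=X+Y$. A lattice term is built from variables using $\vee$ and $\wedge$; a lattice identity is $p=q$ (universally quantified) for lattice terms $p,q$. The dual of a term is obtained by interchanging $\vee$ and $\wedge$; the dual of an identity is obtained by dualizing both sides. *)

(* Defs.v *)
From HB Require Import structures.
From mathcomp Require Import all_boot all_algebra.
Set Implicit Arguments. Unset Strict Implicit. Unset Printing Implicit Defensive.
Import GRing.Theory.
Local Open Scope ring_scope.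

Inductive lterm : Type :=
  | LVar of nat
  | LJoin of lterm & lterm
  | LMeet of lterm & lterm.

Fixpoint ldual (t : lterm) : lterm :=
  match t with
  | LVar i => LVar i
  | LJoin p q => LMeet (ldual p) (ldual q)
  | LMeet p q => LJoin (ldual p) (ldual q)
  end.

Definition lidentity := (lterm * lterm)%type.
Definition lidentity_dual (l : lidentity) : lidentity := (ldual l.1, ldual l.2).

Definition is_submodule (R : pzRingType) (M : lmodType R) (S : M -> Prop) : Prop :=
  [/\ S 0,
      (forall x y, S x -> S y -> S (x + y)) &
      (forall (a : R) x, S x -> S (a *: x))].

Fixpoint sub_eval (R : pzRingType) (M : lmodType R) (e : nat -> M -> Prop)
    (t : lterm) : M -> Prop :=
  match t with
  | LVar i => e i
  | LJoin p q => fun x => exists y z, [/\ sub_eval e p y, sub_eval e q z & x = y + z]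
  | LMeet p q => fun x => sub_eval e p x /\ sub_eval e q x
  end.

Definition holds_in_Sub (R : pzRingType) (M : lmodType R) (l : lidentity) : Prop :=
  forall e : nat -> M -> Prop, (forall i, is_submodule (e i)) ->
    forall x : M, sub_eval e l.1 x <-> sub_eval e l.2 x.

(* Main.v *)
Require Import Defs.
From HB Require Import structures.
From mathcomp Require Import all_boot all_algebra.
From mathcomp Require Import all_order.
From mathcomp Require Import ring lra zify.
From mathcomp Require Import boolp.
From mathcomp Require classical_sets.

Set Implicit Arguments. Unset Strict Implicit. Unset Printing Implicit Defensive.
Import Order.TTheory GRing.Theory Num.Theory.
Local Open Scope ring_scope.

Definition cong (a b : rat) := exists k : int, a - b = k%:~R.
Lemma cong_refl a : cong a a. Proof. by exists 0; rewrite subrr. Qed.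
Lemma cong_sym a b : cong a b -> cong b a.
Proof. by case=> k h; exists (-k); rewrite -opprB h mulrNz. Qed.
Lemma cong_trans a b c : cong a b -> cong b c -> cong a c.
Proof. case=> k h [l h']; exists (k + l); rewrite intrD -h -h'; ring. Qed.
Lemma congD a b c d : cong a b -> cong c d -> cong (a + c) (b + d).
Proof. case=> k h [l h']; exists (k + l); rewrite intrD -h -h'; ring. Qed.
Lemma congN a b : cong a b -> cong (- a) (- b).
Proof. case=> k h; exists (- k); rewrite mulrNz -h; ring. Qed.
Lemma cong_int a (k : int) : cong (a + k%:~R) a.
Proof. by exists k; rewrite addrC addKr. Qed.

Definition frac (x : rat) := x - (Num.floor x)%:~R.
Lemma frac_ok x : (0 <= frac x) && (frac x < 1).
Proof.
rewrite /frac subr_ge0 floor_le /=.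
have := floorD1_gt x; rewrite intrD ltrBlDl; by [].
Qed.
Lemma frac_cong x : cong (frac x) x.
Proof. by exists (- Num.floor x); rewrite /frac addrAC subrr add0r mulrNz. Qed.

Lemma cong01 a b : (0 <= a) && (a < 1) -> (0 <= b) && (b < 1) -> cong a b -> a = b.
Proof.
move=> /andP[a0 a1] /andP[b0 b1] [k h].
have h1 : k%:~R < 1 :> rat by rewrite -h; lra.
have h2 : (-k)%:~R < 1 :> rat by rewrite mulrNz -h; lra.
have : k = 0.
  move: h1 h2; rewrite !ltrz1; lia.
by move=> k0; move: h; rewrite k0 => /eqP; rewrite subr_eq0 => /eqP.
Qed.

Record qz := QZ { qv : rat; qv_ok : (0 <= qv) && (qv < 1) }.
HB.instance Definition _ := [isSub for qv].
HB.instance Definition _ := [Choice of qz by <:].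

Definition mkq (x : rat) : qz := QZ (frac_ok x).
Lemma mkqE x : cong (qv (mkq x)) x. Proof. exact: frac_cong. Qed.
Lemma qz_eq (a b : qz) : cong (qv a) (qv b) -> a = b.
Proof. by move=> h; apply: val_inj; apply: cong01 (qv_ok a) (qv_ok b) h. Qed.

Definition qzero := mkq 0.
Definition qadd (a b : qz) := mkq (qv a + qv b).
Definition qopp (a : qz) := mkq (- qv a).

Lemma qaddA : associative qadd.
Proof.
move=> a b c; apply: qz_eq; rewrite /qadd.
apply: (@cong_trans _ (qv a + qv b + qv c)).
  apply: cong_trans (mkqE _) _; rewrite -addrA; apply: congD; first exact: cong_refl.
  exact: mkqE.
apply: cong_sym; apply: cong_trans (mkqE _) _; apply: congD; last exact: cong_refl.
exact: mkqE.
Qed.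
Lemma qaddC : commutative qadd.
Proof. by move=> a b; rewrite /qadd addrC. Qed.
Lemma qadd0 : left_id qzero qadd.
Proof.
move=> a; apply: qz_eq; apply: cong_trans (mkqE _) _.
rewrite -[X in cong _ X]add0r; apply: congD; [exact: mkqE|exact: cong_refl].
Qed.
Lemma qaddN : left_inverse qzero qopp qadd.
Proof.
move=> a; apply: qz_eq; apply: cong_trans (mkqE _) _.
apply: cong_sym; apply: cong_trans (mkqE _) _.
rewrite -(addNr (qv a)); apply: congD; [exact: cong_sym (mkqE _)|exact: cong_refl].
Qed.

HB.instance Definition _ := GRing.isZmodule.Build qz qaddA qaddC qadd0 qaddN.

Lemma qvD (a b : qz) : cong (qv (a + b)) (qv a + qv b). Proof. exact: mkqE. Qed.
Lemma qvN (a : qz) : cong (qv (- a)) (- qv a). Proof. exact: mkqE. Qed.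
Lemma qv0 : qv (0 : qz) = 0.
Proof. by apply: cong01 (qv_ok 0) _ (mkqE 0); rewrite lexx ltr01. Qed.
Lemma qvn (a : qz) (n : nat) : cong (qv (a *+ n)) (qv a * n%:R).
Proof.
elim: n => [|n IH].
- by rewrite mulr0n mulr0 qv0; exact: cong_refl.
- rewrite mulrSr -addn1 natrD mulrDr mulr1; apply: cong_trans (qvD _ _) _.
  apply: congD => //; exact: cong_refl.
Qed.
Lemma qvz (a : qz) (k : int) : cong (qv (a *~ k)) (qv a * k%:~R).
Proof.
case: k => n.
- exact: qvn.
- rewrite NegzE mulrNz; apply: cong_trans (qvN _) _.
  rewrite intrN mulrN; apply: congN; exact: qvn.
Qed.

Lemma congMz a b (k : int) : cong a b -> cong (a * k%:~R) (b * k%:~R).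
Proof. by case=> m h; exists (m * k); rewrite -mulrBl h intrM. Qed.

Lemma mkq_id x : 0 <= x < 1 -> qv (mkq x) = x.
Proof. by move=> h; apply: cong01 (qv_ok _) h (mkqE x). Qed.

Lemma qz_div (t : qz) (n : nat) : (0 < n)%N -> exists c : qz, c *~ n = t.
Proof.
move=> n0; exists (mkq (qv t / n%:R)); apply: qz_eq.
apply: cong_trans (qvz _ _) _.
have nz : (n%:R : rat) != 0 by rewrite pnatr_eq0 -lt0n.
have -> : (Posz n)%:~R = (n%:R : rat) by [].
rewrite -[X in cong _ X](divfK nz).
apply: (@congMz _ _ n); exact: mkqE.
Qed.

Lemma qz_order (n : nat) : (n != 1)%N -> exists c : qz, c != 0 /\ c *~ n = 0.
Proof.
move=> n1.
have [n0|n0] := eqVneq n 0%N.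
  exists (mkq (1/2)); rewrite n0 mulr0z; split => //.
have n2 : (1 < n)%N by rewrite ltn_neqAle eq_sym n1 lt0n n0.
have h01 : (0 <= 1 / n%:R :> rat) && (1 / n%:R < 1 :> rat).
  apply/andP; split; first by rewrite divr_ge0 // ler0n.
  by rewrite ltr_pdivrMr ?ltr0n ?(ltn_trans _ n2) // mul1r ltr1n.
exists (mkq (1 / n%:R)); split.
  apply/negP => /eqP /(congr1 qv); rewrite qv0 mkq_id //.
  by apply/eqP; rewrite mulf_neq0 // invr_eq0 pnatr_eq0.
apply: qz_eq; rewrite qv0; apply: cong_trans (qvz _ _) _.
have -> : (Posz n)%:~R = (n%:R : rat) by [].
rewrite mkq_id // mul1r mulVf; last by rewrite pnatr_eq0.
by exists 1; rewrite subr0.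
Qed.

Set Implicit Arguments. Unset Strict Implicit. Unset Printing Implicit Defensive.
Import Order.TTheory GRing.Theory Num.Theory.
Local Open Scope ring_scope.

Lemma int_ideal_mul (P : int -> Prop) : P 0 -> (forall a b, P a -> P b -> P (a - b)) ->
  forall a q, P a -> P (q * a).
Proof.
move=> P0 PB a q Pa.
have PN x : P x -> P (- x) by move=> Px; rewrite -sub0r; apply: PB.
have Pn (m : nat) : P (m%:Z * a).
  elim: m => [|m IH]; first by rewrite mul0r.
  have -> : (m.+1%:Z * a) = m%:Z * a - (- a) by rewrite opprK -addn1 PoszD mulrDl mul1r.
  by apply: PB => //; apply: PN.
case: q => m; first exact: Pn.
rewrite NegzE mulNr; apply: PN; exact: Pn.
Qed.

Lemma int_ideal (P : int -> Prop) : P 0 -> (forall a b, P a -> P b -> P (a - b)) ->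
  exists n : nat, forall k, P k <-> (n%:Z %| k)%Z.
Proof.
move=> P0 PB.
have PN x : P x -> P (- x) by move=> Px; rewrite -sub0r; apply: PB.
have PM := int_ideal_mul P0 PB.
have [[k [k0 Pk]]|none] := pselect (exists k, k != 0 /\ P k); last first.
  exists 0%N => k; split.
    move=> Pk; have [->|kn0] := eqVneq k 0; first by rewrite dvdz0.
    by exfalso; apply: none; exists k.
  by rewrite dvd0z => /eqP ->.
pose Q := fun m : nat => `[< (0 < m)%N /\ P m%:Z >].
have exQ : exists m, Q m.
  exists `|k|%N; apply/asboolP; split; first by rewrite absz_gt0.
  have [kp|kn] := lerP 0 k.
    by rewrite gez0_abs.
  by rewrite ltz0_abs //; apply: PN.
case: (ex_minnP exQ) => n /asboolP [n0 Pn] nmin.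
exists n => j; split; last first.
  by move=> /divzK <-; apply: PM.
move=> Pj.
have nz : (n%:Z != 0) by rewrite eqz_nat -lt0n.
have r0 := modz_ge0 j nz.
have rlt : (j %% n < n)%Z by rewrite ltz_pmod // ltz_nat.
have Pr : P (j %% n)%Z.
  have -> : (j %% n)%Z = j - (j %/ n)%Z * n by rewrite {2}(divz_eq j n); ring.
  by apply: PB => //; apply: PM.
apply/dvdz_mod0P.
move: r0 rlt Pr; case: (j %% n)%Z => // r _ rlt Pr.
case: r rlt Pr => // r rlt Pr.
have := nmin r.+1 (introT (asboolP _) (conj (ltn0Sn r) Pr)).
by move: rlt; rewrite ltz_nat; lia.
Qed.

Section Ext.
Variable M : zmodType.

Definition subg (S : M -> Prop) :=
  [/\ S 0, (forall x y, S x -> S y -> S (x + y)) & (forall x, S x -> S (- x))].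
Definition addon (S : M -> Prop) (g : M -> qz) :=
  forall x y, S x -> S y -> g (x + y) = g x + g y.

Lemma subgB S x y : subg S -> S x -> S y -> S (x - y).
Proof. by case=> _ hD hN Sx Sy; apply: hD => //; apply: hN. Qed.

Lemma subgz S x k : subg S -> S x -> S (x *~ k).
Proof.
move=> sS Sx; case: (sS) => S0 SD SN.
have hn (m : nat) : S (x *~ m).
  by elim: m => [|m IH]; rewrite ?mulr0z // -addn1 PoszD mulrzDr mulr1z; apply: SD.
by case: k => m; [apply: hn | rewrite NegzE mulrNz; apply: SN].
Qed.

Lemma addon0 S g : subg S -> addon S g -> g 0 = 0.
Proof.
case=> S0 _ _ ag; have h := ag 0 0 S0 S0; rewrite addr0 in h.
by apply: (@addrI _ (g 0)); rewrite addr0 -h.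
Qed.

Lemma addonN S g x : subg S -> addon S g -> S x -> g (- x) = - g x.
Proof.
move=> sS ag Sx; case: (sS) => S0 _ SN.
have h := ag x (- x) Sx (SN _ Sx); rewrite subrr (addon0 sS ag) in h.
by apply: (@addrI _ (g x)); rewrite -h subrr.
Qed.

Lemma addonz S g x k : subg S -> addon S g -> S x -> g (x *~ k) = g x *~ k.
Proof.
move=> sS ag Sx; case: (sS) => S0 SD SN.
have hn (m : nat) : g (x *~ m) = g x *~ m.
  elim: m => [|m IH]; first by rewrite !mulr0z (addon0 sS ag).
  rewrite -addn1 PoszD !mulrzDr !mulr1z ag ?IH //; exact: subgz.
case: k => m; first exact: hn.
by rewrite NegzE !mulrNz (addonN sS ag) ?hn //; apply: subgz.
Qed.

Lemma zL1 (a b c d : M) : a + b = c + d -> b - d = c - a.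
Proof. by move=> h; apply/eqP; rewrite subr_eq addrAC -h addrC addKr. Qed.
Lemma zL2 (V : zmodType) (a b c d : V) : a - b = c - d -> a + d = b + c.
Proof.
move=> h; apply/eqP; rewrite -subr_eq0 opprD addrACA h addrA addrNK subrr //.
Qed.

Lemma ext1 S g y (c : qz) : subg S -> addon S g ->
  (forall k, S (y *~ k) -> g (y *~ k) = c *~ k) ->
  exists S' g', [/\ subg S', addon S' g', (forall x, S x -> S' x /\ g' x = g x),
                  S' y & g' y = c].
Proof.
move=> sS ag comp; case: (sS) => S0 SD SN.
pose S' z := exists p : M * int, S p.1 /\ z = p.1 + y *~ p.2.
pose g' z := match pselect (S' z) with
             | left h => let p := proj1_sig (cid h) in g p.1 + c *~ p.2
             | right _ => 0 end.
have key s k : S s -> g' (s + y *~ k) = g s + c *~ k.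
  move=> Ss; rewrite /g'; case: pselect => [h|h]; last first.
    by exfalso; apply: h; exists (s, k).
  case: (cid h) => [[s' k']] /= [Ss' e].
  have ed : y *~ (k - k') = s' - s by rewrite mulrzBr; apply: zL1.
  have Sd : S (y *~ (k - k')) by rewrite ed; exact: subgB.
  have := comp _ Sd; rewrite ed ag ?(addonN sS ag) //; last exact: SN.
  by rewrite mulrzBr => /zL2.
exists S', g'; split.
- split; first by exists (0, 0); rewrite /= mulr0z addr0.
  + move=> _ _ [[s k] /= [Ss ->]] [[s' k'] /= [Ss' ->]].
    by exists (s + s', k + k') => /=; split; [apply: SD | rewrite mulrzDr addrACA].
  + move=> _ [[s k] /= [Ss ->]]; exists (- s, - k) => /=; split; first exact: SN.
    by rewrite mulrNz opprD.
- move=> _ _ [[s k] /= [Ss ->]] [[s' k'] /= [Ss' ->]].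
  have -> : s + y *~ k + (s' + y *~ k') = (s + s') + y *~ (k + k').
    by rewrite mulrzDr addrACA.
  by rewrite !key ?ag //; [rewrite mulrzDr addrACA | apply: SD].
- move=> x Sx; split; first by exists (x, 0); rewrite /= mulr0z addr0.
  by have := key x 0 Sx; rewrite !mulr0z !addr0.
- by exists (0, 1); rewrite /= add0r mulr1z.
- by have := key 0 1 S0; rewrite !add0r !mulr1z (addon0 sS ag) add0r.
Qed.

Lemma ideal_of S y : subg S ->
  exists n : nat, forall k, S (y *~ k) <-> (n%:Z %| k)%Z.
Proof.
move=> sS; case: (sS) => S0 _ _; apply: int_ideal; first by rewrite mulr0z.
by move=> a b Sa Sb; rewrite mulrzBr; apply: subgB.
Qed.

Lemma ext_c S g y : subg S -> addon S g ->
  exists c : qz, forall k, S (y *~ k) -> g (y *~ k) = c *~ k.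
Proof.
move=> sS ag; have [n hn] := ideal_of y sS.
have [n0|n0] := eqVneq n 0%N.
  exists 0 => k /hn; rewrite n0 dvd0z => /eqP ->.
  by rewrite !mulr0z (addon0 sS ag).
have [c hc] : exists c : qz, c *~ n = g (y *~ n) by apply: qz_div; rewrite lt0n.
exists c => k /hn /divzK <-.
rewrite -!mulrzA_C (addonz _ sS ag) ?hc //; exact/hn/dvdzz.
Qed.

Lemma sep_c S y : subg S -> ~ S y ->
  exists c : qz, c != 0 /\ forall k, S (y *~ k) -> c *~ k = 0.
Proof.
move=> sS nSy; have [n hn] := ideal_of y sS.
have n1 : (n != 1)%N.
  by apply/negP => /eqP n1; apply: nSy; rewrite -[y]mulr1z; apply/hn; rewrite n1 dvd1z.
have [c [c0 hc]] := qz_order n1.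
exists c; split => // k /hn /divzK <-.
by rewrite -mulrzA_C hc mul0rz.
Qed.

Lemma ext_all S0 g0 : subg S0 -> addon S0 g0 ->
  exists G : M -> qz, (forall x y, G (x + y) = G x + G y) /\
                      (forall x, S0 x -> G x = g0 x).
Proof.
move=> sS0 ag0.
pose PT (p : (M -> Prop) * (M -> qz)) :=
  [/\ subg p.1, addon p.1 p.2 & forall x, S0 x -> p.1 x /\ p.2 x = g0 x].
pose T := {p | PT p}.
pose R (a b : T) := `[< forall x, (sval a).1 x -> (sval b).1 x /\ (sval b).2 x = (sval a).2 x >].
have t0P : PT (S0, g0) by split.
pose t0 : T := exist _ (S0, g0) t0P.
have Rrefl : forall a, R a a by move=> a; apply/asboolP.
have Rtrans : forall a b c, R a b -> R b c -> R a c.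
  move=> a b c /asboolP hab /asboolP hbc; apply/asboolP => x /hab [/hbc [h1 h2] h3].
  by split => //; rewrite h2.
have Rchain : forall A : classical_sets.set T, classical_sets.total_on A (fun x y => R x y) ->
    exists t, forall s, A s -> R s t.
  move=> A totA.
  have [[a0 Aa0]|none] := pselect (exists a, A a); last first.
    by exists t0 => s As; exfalso; apply: none; exists s.
  pose U1 x := exists a, A a /\ (sval a).1 x.
  pose U2 x := match pselect (U1 x) with
               | left h => (sval (proj1_sig (cid h))).2 x
               | right _ => 0 end.
  have Uval a x : A a -> (sval a).1 x -> U2 x = (sval a).2 x.
    move=> Aa ax; rewrite /U2; case: pselect => [h|h]; last first.
      by exfalso; apply: h; exists a.
    case: (cid h) => a' /= [Aa' a'x].
    by case: (totA _ _ Aa Aa') => /asboolP hh; have [] := hh x => //.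
  have big a b : A a -> A b -> exists c, [/\ A c, forall x, (sval a).1 x -> (sval c).1 x
                                  & forall x, (sval b).1 x -> (sval c).1 x].
    move=> Aa Ab; case: (totA _ _ Aa Ab) => /asboolP hh.
      by exists b; split => // x /hh [].
    by exists a; split => // x /hh [].
  have PU : PT (U1, U2).
    split => /=.
    - split.
      + exists a0; split => //; case: (proj2_sig a0) => [[]] //.
      + move=> x y [a [Aa ax]] [b [Ab bx]]; have [c [Ac hac hbc]] := big a b Aa Ab.
        exists c; split => //; case: (proj2_sig c) => [[_ cD _]] _ _; apply: cD; [exact: hac|exact: hbc].
      + move=> x [a [Aa ax]]; exists a; split => //; case: (proj2_sig a) => [[_ _ aN]] _ _; exact: aN.
    - move=> x y [a [Aa ax]] [b [Ab bx]]; have [c [Ac hac hbc]] := big a b Aa Ab.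
      case: (proj2_sig c) => [[_ cD _]] cadd _.
      have cx := hac x ax; have cy := hbc y bx; have cxy := cD _ _ cx cy.
      by rewrite (Uval c (x + y)) // (Uval c x) // (Uval c y) //; exact: cadd.
    - move=> x S0x; case: (proj2_sig a0) => _ _ /(_ x S0x) [h1 h2].
      split; first by exists a0.
      by rewrite (Uval a0).
  exists (exist _ (U1, U2) PU) => s As; apply/asboolP => x sx /=.
  split; first by exists s.
  exact: Uval.
have [t tmax] := classical_sets.ZL_preorder t0 Rrefl Rtrans Rchain.
have total x : (sval t).1 x.
  apply: contrapT => ntx.
  case: (proj2_sig t) => st at0 tS0.
  have [c hc] := ext_c x st at0.
  have [S' [g' [sS' ag' ext S'x _]]] := ext1 st at0 hc.
  have sP : PT (S', g').
    split => // z S0z; have [h1 h2] := tS0 z S0z; have [h3 h4] := ext z h1.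
    by split => //=; rewrite h4.
  have := tmax (exist _ (S', g') sP) (introT (asboolP _) ext).
  by move=> /asboolP /(_ x S'x) [].
exists (sval t).2; split.
- case: (proj2_sig t) => [[_ _ _]] tadd _ x y; exact: tadd.
- by move=> x S0x; case: (proj2_sig t) => _ _ /(_ x S0x) [].
Qed.
End Ext.

Lemma separate (M : zmodType) (X : M -> Prop) (y : M) : subg X -> ~ X y ->
  exists G : M -> qz, [/\ (forall a b, G (a + b) = G a + G b),
                         (forall x, X x -> G x = 0) & G y != 0].
Proof.
move=> sX nXy; have [c [c0 hc]] := sep_c sX nXy.
have ag : addon X (fun _ => 0) by move=> *; rewrite addr0.
have [S' [g' [sS' ag' ext S'y g'y]]] :=
  @ext1 _ X (fun _ => 0) y c sX ag (fun k Sk => esym (hc k Sk)).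
have [G [Gadd GS']] := ext_all sS' ag'.
exists G; split => //.
  by move=> x Xx; have [h1 h2] := ext x Xx; rewrite GS' // h2.
by rewrite GS' // g'y.
Qed.

Set Implicit Arguments. Unset Strict Implicit. Unset Printing Implicit Defensive.
Import Order.TTheory GRing.Theory Num.Theory.
Local Open Scope ring_scope.

Fixpoint geval (N : Type) (add : N -> N -> N) (e : nat -> N -> Prop) (t : lterm) : N -> Prop :=
  match t with
  | LVar i => e i
  | LJoin p q => fun x => exists y z, [/\ geval add e p y, geval add e q z & x = add y z]
  | LMeet p q => fun x => geval add e p x /\ geval add e q x
  end.

Lemma sub_evalE (R : pzRingType) (M : lmodType R) e t (x : M) :
  sub_eval e t x <-> geval +%R e t x.
Proof.
elim: t x => [i|p IHp q IHq|p IHp q IHq] x /=; first by [].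
- split=> [[y [z [hy hz ->]]]|[y [z [hy hz ->]]]]; exists y, z; split => //;
    by [apply/IHp | apply/IHq].
- by rewrite IHp IHq.
Qed.

Lemma push (N1 N2 : Type) add1 add2 (e1 : nat -> N1 -> Prop) (e2 : nat -> N2 -> Prop)
  (h : N1 -> N2) : (forall u v, h (add1 u v) = add2 (h u) (h v)) ->
  (forall i v, e1 i v -> e2 i (h v)) ->
  forall s v, geval add1 e1 s v -> geval add2 e2 s (h v).
Proof.
move=> hadd he; elim=> [i|p IHp q IHq|p IHp q IHq] v /=; first exact: he.
- by move=> [y [z [hy hz ->]]]; exists (h y), (h z); split; [apply: IHp|apply: IHq|].
- by move=> [hp hq]; split; [apply: IHp|apply: IHq].
Qed.

Section Sub.
Variables (R : pzRingType) (M : lmodType R).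

Lemma sub_eval_sub (e : nat -> M -> Prop) : (forall i, is_submodule (e i)) ->
  forall t, is_submodule (sub_eval e t).
Proof.
move=> he; elim=> [i|p IHp q IHq|p IHp q IHq] /=; first exact: he.
- case: IHp => p0 pD pZ; case: IHq => q0 qD qZ; split.
  + by exists 0, 0; rewrite addr0.
  + move=> _ _ [y [z [hy hz ->]]] [y' [z' [hy' hz' ->]]].
    by exists (y + y'), (z + z'); split; [apply: pD|apply: qD|rewrite addrACA].
  + move=> a _ [y [z [hy hz ->]]]; exists (a *: y), (a *: z); split;
      by [apply: pZ|apply: qZ|rewrite scalerDr].
- case: IHp => p0 pD pZ; case: IHq => q0 qD qZ; split.
  + by [].
  + by move=> x y [] ? ? [] ? ?; split; [apply: pD|apply: qD].
  + by move=> a x [] ? ?; split; [apply: pZ|apply: qZ].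
Qed.

Lemma sub_subg (S : M -> Prop) : is_submodule S -> subg S.
Proof.
case=> S0 SD SZ; split => // x Sx; rewrite -scaleN1r; exact: SZ.
Qed.

(* the dual "right module" of M *)
Definition addf (f : M -> qz) := forall a b, f (a + b) = f a + f b.
Definition perp (C : M -> Prop) (f : M -> qz) := addf f /\ forall m, C m -> f m = 0.
Definition fadd (f g : M -> qz) := fun m => f m + g m.

Lemma dual_easy (e : nat -> M -> Prop) t f :
  geval fadd (fun i => perp (e i)) t f ->
  addf f /\ forall m, sub_eval e (ldual t) m -> f m = 0.
Proof.
elim: t f => [i|p IHp q IHq|p IHp q IHq] f /=; first by [].
- move=> [y [z [/IHp [ay hy] /IHq [az hz] ->]]]; split.
    by move=> a b; rewrite /fadd ay az addrACA.
  by move=> m [hm1 hm2]; rewrite /fadd hy // hz // addr0.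
- move=> [/IHp [af hp] /IHq [_ hq]]; split => // _ [y [z [/hp hy /hq hz' ->]]].
  by rewrite af hy hz' addr0.
Qed.

Lemma dual_hard (e : nat -> M -> Prop) : (forall i, is_submodule (e i)) ->
  forall t f, addf f -> (forall m, sub_eval e (ldual t) m -> f m = 0) ->
  geval fadd (fun i => perp (e i)) t f.
Proof.
move=> he; elim=> [i|p IHp q IHq|p IHp q IHq] f af hf /=; first by split.
-
  pose X := sub_eval e (ldual p); pose Y := sub_eval e (ldual q).
  have sX : subg X by apply/sub_subg/sub_eval_sub.
  have sY : subg Y by apply/sub_subg/sub_eval_sub.
  pose S z := exists xy : M * M, [/\ X xy.1, Y xy.2 & z = xy.1 + xy.2].
  pose g z := match pselect (S z) with
              | left h => f (proj1_sig (cid h)).1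
              | right _ => 0 end.
  have f0 : f 0 = 0.
    by have := af 0 0; rewrite addr0 => h; apply: (@addrI _ (f 0)); rewrite addr0 -h.
  have fN a : f (- a) = - f a.
    by apply: (@addrI _ (f a)); rewrite -af !subrr.
  have key x y : X x -> Y y -> g (x + y) = f x.
    move=> Xx Yy; rewrite /g; case: pselect => [h|h]; last first.
      by exfalso; apply: h; exists (x, y).
    case: (cid h) => [[x' y']] /= [Xx' Yy' exy].
    have d1 : X (x - x') by apply: subgB.
    have exx : x - x' = y' - y by apply: zL1; rewrite addrC exy addrC.
    have d2 : Y (x - x') by rewrite exx; apply: subgB.
    have := hf (x - x') (conj d1 d2); rewrite af fN => /eqP; rewrite subr_eq0 => /eqP.
    by move=> ->.
  have sS : subg S.
    case: sX => X0 XD XN; case: sY => Y0 YD YN; split.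
    + by exists (0, 0); rewrite /= addr0.
    + move=> _ _ [[x y] /= [Xx Yy ->]] [[x' y'] /= [Xx' Yy' ->]].
      by exists (x + x', y + y'); split => /=; [apply: XD|apply: YD|rewrite addrACA].
    + move=> _ [[x y] /= [Xx Yy ->]]; exists (- x, - y); split => /=;
        by [apply: XN|apply: YN|rewrite opprD].
  have ag : addon S g.
    move=> _ _ [[x y] /= [Xx Yy ->]] [[x' y'] /= [Xx' Yy' ->]].
    case: sX => X0 XD XN; case: sY => Y0 YD YN.
    by rewrite addrACA !key // ?af //; [apply: XD|apply: YD].
  have [G [Gadd GS]] := ext_all sS ag.
  have GX x : X x -> G x = f x.
    move=> Xx; rewrite GS; last by exists (x, 0); split => //=; [case: sY|rewrite addr0].
    by rewrite -{1}[x]addr0 key //; case: sY.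
  have GY y : Y y -> G y = 0.
    move=> Yy; rewrite GS; last by exists (0, y); split => //=; [case: sX|rewrite add0r].
    by rewrite -{1}[y]add0r key //; case: sX.
  exists (fun m => f m - G m), G; split.
  + apply: IHp.
      by move=> a b; rewrite af Gadd opprD addrACA.
    by move=> m Xm; rewrite GX // subrr.
  + apply: IHq => // m Ym; exact: GY.
  + by apply: funext => m; rewrite /fadd subrK.
-
  have s0 t : sub_eval e (ldual t) 0 by case: (sub_eval_sub he (ldual t)).
  split.
  + apply: IHp => // m hm; apply: hf; exists m, 0; split => //; by rewrite addr0.
  + apply: IHq => // m hm; apply: hf; exists 0, m; split => //; by rewrite add0r.
Qed.

End Sub.
Arguments fadd {R M}.
Arguments addf {R M}.
Arguments perp {R M}.

Unset Implicit Arguments.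
Import Order.TTheory GRing.Theory Num.Theory.
Local Open Scope ring_scope.

Fixpoint tsize (t : lterm) : nat :=
  match t with
  | LVar _ => 1%N
  | LJoin p q => (tsize p + tsize q)%N
  | LMeet p q => (tsize p + tsize q)%N
  end.

Section Univ.
Variable R : pzRingType.

Fixpoint ux (t : lterm) : 'rV[R]_(tsize t) :=
  match t as t0 return 'rV[R]_(tsize t0) with
  | LVar _ => const_mx 1
  | LJoin p q => row_mx (ux p) (ux q)
  | LMeet p q => row_mx (ux p) 0
  end.

Fixpoint uG (t : lterm) (i : nat) : 'rV[R]_(tsize t) -> Prop :=
  match t as t0 return 'rV[R]_(tsize t0) -> Prop with
  | LVar j => fun v => if j == i then True else v = 0
  | LJoin p q => fun v => uG p i (lsubmx v) /\ uG q i (rsubmx v)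
  | LMeet p q => fun v => uG p i (lsubmx v) /\ uG q i (rsubmx v)
  end.

Fixpoint uK (t : lterm) : 'rV[R]_(tsize t) -> Prop :=
  match t as t0 return 'rV[R]_(tsize t0) -> Prop with
  | LVar j => fun v => v = 0
  | LJoin p q => fun v => uK p (lsubmx v) /\ uK q (rsubmx v)
  | LMeet p q => fun v => exists r : R,
       uK p (lsubmx v - r *: ux p) /\ uK q (rsubmx v + r *: ux q)
  end.

Definition uA t i (v : 'rV[R]_(tsize t)) := exists a b, [/\ uG t i a, uK t b & v = a + b].

Lemma uG_sub t i : is_submodule (uG t i).
Proof.
elim: t => [j|p IHp q IHq|p IHp q IHq] /=.
- case: eqP => _; split => //; first by move=> x y -> ->; rewrite addr0.
  by move=> a x ->; rewrite scaler0.
- case: IHp => p0 pD pZ; case: IHq => q0 qD qZ; split.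
  + by rewrite !linear0.
  + by move=> x y [? ?] [? ?]; rewrite !linearD; split; [apply: pD|apply: qD].
  + by move=> a x [? ?]; rewrite !linearZ; split; [apply: pZ|apply: qZ].
- case: IHp => p0 pD pZ; case: IHq => q0 qD qZ; split.
  + by rewrite !linear0.
  + by move=> x y [? ?] [? ?]; rewrite !linearD; split; [apply: pD|apply: qD].
  + by move=> a x [? ?]; rewrite !linearZ; split; [apply: pZ|apply: qZ].
Qed.

Lemma uK_sub t : is_submodule (uK t).
Proof.
elim: t => [j|p IHp q IHq|p IHp q IHq] /=.
- split => //; first by move=> x y -> ->; rewrite addr0.
  by move=> a x ->; rewrite scaler0.
- case: IHp => p0 pD pZ; case: IHq => q0 qD qZ; split.
  + by rewrite !linear0.
  + by move=> x y [? ?] [? ?]; rewrite !linearD; split; [apply: pD|apply: qD].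
  + by move=> a x [? ?]; rewrite !linearZ; split; [apply: pZ|apply: qZ].
- case: IHp => p0 pD pZ; case: IHq => q0 qD qZ; split.
  + by exists 0; rewrite !linear0 !scale0r subr0 addr0.
  + move=> x y [r [h1 h2]] [r' [h3 h4]]; exists (r + r'); rewrite !linearD !scalerDl.
    split.
    * by have := pD _ _ h1 h3; rewrite opprD addrACA.
    * by have := qD _ _ h2 h4; rewrite addrACA.
  + move=> a x [r [h1 h2]]; exists (a * r); split.
    * have -> : lsubmx (a *: x) - (a * r) *: ux p = a *: (lsubmx x - r *: ux p).
        by rewrite linearZ /= scalerBr scalerA.
      exact: pZ.
    * have -> : rsubmx (a *: x) + (a * r) *: ux q = a *: (rsubmx x + r *: ux q).
        by rewrite linearZ /= scalerDr scalerA.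
      exact: qZ.
Qed.

Lemma uA_sub t i : is_submodule (uA t i).
Proof.
case: (uG_sub t i) => g0 gD gZ; case: (uK_sub t) => k0 kD kZ; split.
- by exists 0, 0; rewrite addr0.
- move=> _ _ [a [b [ha hb ->]]] [a' [b' [ha' hb' ->]]].
  by exists (a + a'), (b + b'); split; [apply: gD|apply: kD|rewrite addrACA].
- move=> r _ [a [b [ha hb ->]]]; exists (r *: a), (r *: b).
  by split; [apply: gZ|apply: kZ|rewrite scalerDr].
Qed.

Lemma evalK t s (v k : 'rV[R]_(tsize t)) :
  sub_eval (uA t) s v -> uK t k -> sub_eval (uA t) s (v + k).
Proof.
case: (uK_sub t) => k0 kD kZ.
elim: s v => [i|p IHp q IHq|p IHp q IHq] v /=.
- move=> [a [b [ha hb ->]]] hk; exists a, (b + k); split => //; first exact: kD.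
  by rewrite addrA.
- move=> [y [z [hy hz ->]]] hk; exists y, (z + k); split => //; first exact: IHq.
  by rewrite addrA.
- by move=> [hp hq] hk; split; [apply: IHp|apply: IHq].
Qed.

Lemma univ_in t : sub_eval (uA t) t (ux t).
Proof.
have pushE (n m : nat) (f : 'rV[R]_n -> 'rV[R]_m) (e1 e2 : nat -> _ -> Prop) s v :
    (forall u w, f (u + w) = f u + f w) -> (forall i v, e1 i v -> e2 i (f v)) ->
    sub_eval e1 s v -> sub_eval e2 s (f v).
  move=> hadd he /sub_evalE hv; apply/sub_evalE; exact: (push hadd he).
elim: t => [j|p IHp q IHq|p IHp q IHq] /=.
- by exists (const_mx 1), 0; split => //=; [rewrite eqxx | rewrite addr0].
- have hl : sub_eval (uA (LJoin p q)) p (row_mx (ux p) 0).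
    apply: (pushE _ _ (fun v => row_mx v 0) (uA p)) IHp.
      by move=> u w; rewrite add_row_mx addr0.
    move=> i _ [a [b [ha hb ->]]]; exists (row_mx a 0), (row_mx b 0); split => /=.
    + rewrite row_mxKl row_mxKr; split => //; by case: (uG_sub q i).
    + rewrite row_mxKl row_mxKr; split => //; by case: (uK_sub q).
    + by rewrite add_row_mx addr0.
  have hr : sub_eval (uA (LJoin p q)) q (row_mx 0 (ux q)).
    apply: (pushE _ _ (fun v => row_mx 0 v) (uA q)) IHq.
      by move=> u w; rewrite add_row_mx addr0.
    move=> i _ [a [b [ha hb ->]]]; exists (row_mx 0 a), (row_mx 0 b); split => /=.
    + rewrite row_mxKl row_mxKr; split => //; by case: (uG_sub p i).
    + rewrite row_mxKl row_mxKr; split => //; by case: (uK_sub p).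
    + by rewrite add_row_mx addr0.
  by exists (row_mx (ux p) 0), (row_mx 0 (ux q)); split => //; rewrite add_row_mx addr0 add0r.
- have hl : sub_eval (uA (LMeet p q)) p (row_mx (ux p) 0).
    apply: (pushE _ _ (fun v => row_mx v 0) (uA p)) IHp.
      by move=> u w; rewrite add_row_mx addr0.
    move=> i _ [a [b [ha hb ->]]]; exists (row_mx a 0), (row_mx b 0); split => /=.
    + rewrite row_mxKl row_mxKr; split => //; by case: (uG_sub q i).
    + exists 0; rewrite row_mxKl row_mxKr !scale0r subr0 addr0; split => //; by case: (uK_sub q).
    + by rewrite add_row_mx addr0.
  have hr : sub_eval (uA (LMeet p q)) q (row_mx 0 (ux q)).
    apply: (pushE _ _ (fun v => row_mx 0 v) (uA q)) IHq.
      by move=> u w; rewrite add_row_mx addr0.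
    move=> i _ [a [b [ha hb ->]]]; exists (row_mx 0 a), (row_mx 0 b); split => /=.
    + rewrite row_mxKl row_mxKr; split => //; by case: (uG_sub p i).
    + exists 0; rewrite row_mxKl row_mxKr !scale0r subr0 addr0; split => //; by case: (uK_sub p).
    + by rewrite add_row_mx addr0.
  split => //.
  have -> : row_mx (ux p) 0 = row_mx 0 (ux q) + row_mx (ux p) (- ux q).
    by rewrite add_row_mx add0r subrr.
  apply: (evalK (LMeet p q) q _ _ hr) => /=; exists 1.
  rewrite row_mxKl row_mxKr !scale1r subrr addNr.
  by split; [case: (uK_sub p)|case: (uK_sub q)].
Qed.

End Univ.
Arguments ux {R} t.
Arguments uG {R} t i _.
Arguments uK {R} t _.
Arguments uA {R} t i _.
Arguments uG_sub {R} t i.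
Arguments uK_sub {R} t.
Arguments uA_sub {R} t i.
Arguments univ_in {R} t.

Import Order.TTheory GRing.Theory Num.Theory.
Local Open Scope ring_scope.

Section Main.
Variables (R : pzRingType) (M : lmodType R).

Definition fact (f : M -> qz) (r : R) := fun m => f (r *: m).
Definition fzero : M -> qz := fun _ => 0.

Lemma addf0 (f : M -> qz) : addf f -> f 0 = 0.
Proof. by move=> af; have := af 0 0; rewrite addr0 => h; apply: (@addrI _ (f 0)); rewrite addr0 -h. Qed.
Lemma addfN (f : M -> qz) a : addf f -> f (- a) = - f a.
Proof. by move=> af; apply: (@addrI _ (f a)); rewrite -af !subrr addf0. Qed.

Lemma perp0 (C : M -> Prop) : perp C fzero.
Proof. by split => // a b; rewrite /fzero addr0. Qed.
Lemma perpD (C : M -> Prop) f g : perp C f -> perp C g -> perp C (fadd f g).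
Proof.
move=> [af hf] [ag hg]; split.
  by move=> a b; rewrite /fadd af ag addrACA.
by move=> m Cm; rewrite /fadd hf // hg // addr0.
Qed.
Lemma perpZ (C : M -> Prop) f r : is_submodule C -> perp C f -> perp C (fact f r).
Proof.
move=> [_ _ CZ] [af hf]; split.
  by move=> a b; rewrite /fact scalerDr af.
by move=> m Cm; rewrite /fact hf //; apply: CZ.
Qed.
Lemma fadd0 (f : M -> qz) : fadd f fzero = f.
Proof. by apply: funext => m; rewrite /fadd /fzero addr0. Qed.

Lemma univ_map (e : nat -> M -> Prop) : (forall i, is_submodule (e i)) ->
  forall t f, geval fadd (fun i => perp (e i)) t f ->
  exists h : 'rV[R]_(tsize t) -> (M -> qz),
  [/\ forall u v, h (u + v) = fadd (h u) (h v),
      h (ux t) = f,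
      forall r, h (r *: ux t) = fact f r,
      forall i v, uG t i v -> perp (e i) (h v)
    & forall v, uK t v -> h v = fzero].
Proof.
move=> he; elim=> [j|p IHp q IHq|p IHp q IHq] f /=.
- move=> fj; have af : addf f by case: fj.
  exists (fun v => fact f (v ord0 ord0)); split.
  + by move=> u v; apply: funext => m; rewrite /fadd /fact mxE scalerDl af.
  + by apply: funext => m; rewrite /fact mxE scale1r.
  + by move=> r; apply: funext => m; rewrite /fact !mxE mulr1.
  + move=> i v; case: eqP => [<- _|_ ->]; first exact: perpZ.
    have -> : fact f ((0 : 'rV[R]_1) ord0 ord0) = fzero.
      by apply: funext => m; rewrite /fact mxE scale0r addf0.
    exact: perp0.
  + move=> v ->; apply: funext => m; rewrite /fact mxE scale0r addf0 //.
- move=> [y [z [hy hz ->]]].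
  have [h1 [a1 x1 r1 g1 k1]] := IHp _ hy; have [h2 [a2 x2 r2 g2 k2]] := IHq _ hz.
  exists (fun v => fadd (h1 (lsubmx v)) (h2 (rsubmx v))); split.
  + move=> u v; rewrite !linearD a1 a2; apply: funext => m; rewrite /fadd addrACA //.
  + by rewrite row_mxKl row_mxKr x1 x2.
  + by move=> r; rewrite scale_row_mx row_mxKl row_mxKr r1 r2.
  + by move=> i v [ga gb]; apply: perpD; [apply: g1|apply: g2].
  + by move=> v [ka kb]; rewrite k1 // k2 // fadd0.
- move=> [hp hq].
  have [h1 [a1 x1 r1 g1 k1]] := IHp _ hp; have [h2 [a2 x2 r2 g2 k2]] := IHq _ hq.
  have h20 : h2 0 = fzero.
    move: (uK_sub (R:=R) q) => [uq0 _ _]; exact: k2 0 uq0.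
  have hN x m : h2 (- x) m = - h2 x m.
    have := congr1 (fun F => F m) (a2 x (- x)); rewrite subrr h20 /fadd /fzero => h.
    by apply: (@addrI _ (h2 x m)); rewrite -h subrr.
  exists (fun v => fadd (h1 (lsubmx v)) (h2 (rsubmx v))); split.
  + move=> u v; rewrite !linearD a1 a2; apply: funext => m; rewrite /fadd addrACA //.
  + by rewrite row_mxKl row_mxKr x1 h20 fadd0.
  + by move=> r; rewrite scale_row_mx row_mxKl row_mxKr r1 scaler0 h20 fadd0.
  + by move=> i v [ga gb]; apply: perpD; [apply: g1|apply: g2].
  + move=> v [r [ka kb]].
    have e1 : lsubmx v = (lsubmx v - r *: ux p) + r *: ux p by rewrite subrK.
    have e2 : rsubmx v = (rsubmx v + r *: ux q) + (- (r *: ux q)) by rewrite addrK.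
    rewrite e1 e2 a1 a2 k1 // k2 // r1; apply: funext => m.
    by rewrite /fadd /fzero hN r2 !add0r subrr.
Qed.
End Main.
Arguments fzero {R M}.

Lemma dual_step (R : pzRingType) (s t : lterm) :
  (forall (M : lmodType R) (e : nat -> M -> Prop), (forall i, is_submodule (e i)) ->
     forall x, sub_eval e s x -> sub_eval e t x) ->
  forall (M : lmodType R) (e : nat -> M -> Prop), (forall i, is_submodule (e i)) ->
     forall x, sub_eval e (ldual t) x -> sub_eval e (ldual s) x.
Proof.
move=> HP M e he x hx; apply: contrapT => nx.
have sX : subg (sub_eval e (ldual s)) by apply/sub_subg/sub_eval_sub.
have [G [Gadd GX Gx]] := separate sX nx.
have hG := @dual_hard _ _ _ he s G Gadd GX.
have [h [hadd hux _ hGi hK]] := @univ_map R M e he s G hG.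
have hin := univ_in (R:=R) s.
have hin' := HP _ (uA s) (uA_sub s) _ hin.
have hpush : forall i v, uA s i v -> perp (e i) (h v).
  move=> i _ [a [b [ha hb ->]]]; rewrite hadd (hK b hb) fadd0; exact: hGi.
have hin2 : geval (fun a b : 'rV[R]_(tsize s) => a + b) (uA s) t (ux s).
  exact: (proj1 (sub_evalE _ _ _) hin').
have := @push 'rV[R]_(tsize s) (M -> qz) (fun a b => a + b) fadd (uA s)
  (fun i => perp (e i)) h hadd hpush t (ux s) hin2; rewrite hux.
move=> /dual_easy [_ /(_ x hx)] G0.
by move: Gx; rewrite G0 eqxx.
Qed.

Lemma ldualK t : ldual (ldual t) = t.
Proof. by elim: t => //= p -> q ->. Qed.

Lemma half (R : pzRingType) (p q : lterm) :
  (forall M : lmodType R, holds_in_Sub M (p, q)) ->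
  (forall M : lmodType R, holds_in_Sub M (ldual p, ldual q)).
Proof.
move=> H M e he x /=; split.
- apply: (dual_step R q p) => // M' e' he' y; exact: (proj2 (H M' e' he' y)).
- apply: (dual_step R p q) => // M' e' he' y; exact: (proj1 (H M' e' he' y)).
Qed.

Theorem theorem5p1 (R : pzRingType) (l : lidentity) :
  (forall M : lmodType R, holds_in_Sub M l) <->
  (forall M : lmodType R, holds_in_Sub M (lidentity_dual l)).
Proof.
case: l => p q; rewrite /lidentity_dual /=; split; first exact: half.
by move=> /half; rewrite !ldualK.
Qed.
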